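(* Let $(V_1,V_2)$ be a pair of commuting isometries on a Hilbert space $\mathcal H$ with $\operatorname{ran}V_1=\operatorname{ran}V_2$. Then there exist Hilbert spaces $\mathcal L$ and $\mathcal K$ such that, up to unitary equivalence, $\mathcal H=(H^2_{\mathbb D}\otimes\mathcal L)\oplus\mathcal K$ and in this decomposition $$V_1=\begin{pmatrix}M_z\otimes I_{\mathcal L}&0\\0&W_1\end{pmatrix},\qquad V_2=\begin{pmatrix}M_z\otimes W&0\\0&W_2\end{pmatrix}$$ for some unitary $W$ on $\mathcal L$ and commuting unitaries $W_1,W_2$ on $\mathcal K$.
   Context: $H^2_{\mathbb D}$ is the Hardy space of the unit disc and $M_z$ is multiplication by $z$ on it. The condition $\operatorname{ran}V_1=\operatorname{ran}V_2$ is equivalent (for commuting isometries) to the defect operator $I-V_1V_1^*-V_2V_2^*+V_1V_2V_2^*V_1^*$ being a difference of two mutually orthogonal projections whose ranges sum to $\ker(V_1V_2)^*$. *)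

(* Defs.v *)
From mathcomp Require Import all_boot all_algebra.
From mathcomp Require Import complex.
From mathcomp Require Import reals.
Import GRing.Theory Num.Theory.
Set Implicit Arguments. Unset Strict Implicit. Unset Printing Implicit Defensive.
Local Open Scope ring_scope.

Section Hilbert.
Variable R : realType.

Definition is_inner_product (V : lmodType R[i]) (ip : V -> V -> R[i]) : Prop :=
  [/\ (forall (a : R[i]) (x y z : V), ip (a *: x + y) z = a * ip x z + ip y z),
      (forall x y : V, ip y x = (ip x y)^*),
      (forall x : V, 0 <= ip x x) &
      (forall x : V, ip x x = 0 -> x = 0)].

Definition hnorm (V : lmodType R[i]) (ip : V -> V -> R[i]) (x : V) : R :=
  Num.sqrt (complex.Re (ip x x)).

Definition hcauchy (V : lmodType R[i]) (ip : V -> V -> R[i]) (u : nat -> V) :=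
  forall e : R, 0 < e -> exists N : nat, forall m n : nat,
    (N <= m)%N -> (N <= n)%N -> hnorm ip (u m - u n) < e.

Definition hconverges (V : lmodType R[i]) (ip : V -> V -> R[i]) (u : nat -> V) (l : V) :=
  forall e : R, 0 < e -> exists N : nat, forall n : nat,
    (N <= n)%N -> hnorm ip (u n - l) < e.

Definition is_hilbert_sp (V : lmodType R[i]) (ip : V -> V -> R[i]) : Prop :=
  is_inner_product ip /\
  (forall u : nat -> V, hcauchy ip u -> exists l : V, hconverges ip u l).

Definition is_linear_op (V W : lmodType R[i]) (f : V -> W) : Prop :=
  forall (a : R[i]) (x y : V), f (a *: x + y) = a *: f x + f y.

Definition is_isometry_op (V : lmodType R[i]) (ip : V -> V -> R[i]) (f : V -> V) : Prop :=
  is_linear_op f /\ forall x y : V, ip (f x) (f y) = ip x y.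

Definition is_unitary_op (V : lmodType R[i]) (ip : V -> V -> R[i]) (f : V -> V) : Prop :=
  is_isometry_op ip f /\ forall y : V, exists x : V, f x = y.

Definition same_range (V : lmodType R[i]) (f g : V -> V) : Prop :=
  (forall x, exists y, g y = f x) /\ (forall x, exists y, f y = g x).

Definition series_to (a : nat -> R) (s : R) : Prop :=
  forall e : R, 0 < e -> exists N : nat, forall n : nat,
    (N <= n)%N -> `| \sum_(0 <= k < n) a k - s | < e.

(* H^2_D (x) L, realised (via Taylor coefficients f = sum_n a_n z^n, a_n in L)
   as the square-summable L-valued coefficient sequences. *)
Definition in_H2 (L : lmodType R[i]) (ipL : L -> L -> R[i]) (a : nat -> L) : Prop :=
  exists s : R, series_to (fun n => hnorm ipL (a n) ^+ 2) s.

(* M_z (x) T on H^2 (x) L, in coefficients: (a_n)_n |-> (0, T a_0, T a_1, ...) *)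
Definition Mz_tensor (L : lmodType R[i]) (T : L -> L) (a : nat -> L) : nat -> L :=
  fun n => if n is m.+1 then T (a m) else 0.

(* U = (U1, U2) : H -> (H^2 (x) L) (+) K is a unitary operator:
   linear, norm preserving (||x||^2 = sum_n ||a_n||^2 + ||k||^2) and onto. *)
Definition is_unitary_onto_H2L_sum (H L K : lmodType R[i])
    (ipH : H -> H -> R[i]) (ipL : L -> L -> R[i]) (ipK : K -> K -> R[i])
    (U1 : H -> nat -> L) (U2 : H -> K) : Prop :=
  [/\ (forall (a : R[i]) (x y : H) (n : nat),
          U1 (a *: x + y) n = a *: U1 x n + U1 y n),
      is_linear_op U2,
      (forall x : H, series_to (fun n => hnorm ipL (U1 x n) ^+ 2)
                               (hnorm ipH x ^+ 2 - hnorm ipK (U2 x) ^+ 2)) &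
      (forall (a : nat -> L) (k : K), in_H2 ipL a ->
          exists x : H, U1 x = a /\ U2 x = k)].

End Hilbert.

(* Main.v *)
From HB Require Import structures.
Require Import Defs.
From mathcomp Require Import all_boot all_order all_algebra.
From mathcomp Require Import complex.
From mathcomp Require Import classical_sets reals boolp.
From mathcomp Require Import ring lra.
Import GRing.Theory Num.Theory Order.TTheory.
Set Implicit Arguments. Unset Strict Implicit. Unset Printing Implicit Defensive.
Local Open Scope ring_scope.

Section Cx.
Variable R : realType.
Implicit Types z w : R[i].
Lemma conjRe z : complex.Re (z^*) = complex.Re z.
Proof. by case: z. Qed.
Lemma conjIm z : complex.Im (z^*) = - complex.Im z.
Proof. by case: z. Qed.
Lemma ReM z w : complex.Re (z * w) = complex.Re z * complex.Re w - complex.Im z * complex.Im w.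
Proof. by case: z; case: w. Qed.
Lemma ImM z w : complex.Im (z * w) = complex.Re z * complex.Im w + complex.Im z * complex.Re w.
Proof. case: z => a b; case: w => c d /=. ring. Qed.
Lemma ReD z w : complex.Re (z + w) = complex.Re z + complex.Re w.
Proof. by case: z; case: w. Qed.
Lemma ReN z : complex.Re (- z) = - complex.Re z.
Proof. by case: z. Qed.
Lemma ImD z w : complex.Im (z + w) = complex.Im z + complex.Im w.
Proof. by case: z; case: w. Qed.
Lemma le0c z : 0 <= z -> complex.Im z = 0 /\ 0 <= complex.Re z.
Proof. rewrite lecE /= => /andP[/eqP ? ?]; by split. Qed.
Lemma ReC (r : R) : complex.Re ((r%:C)%C : R[i]) = r. Proof. by []. Qed.
Lemma ImC (r : R) : complex.Im ((r%:C)%C : R[i]) = 0. Proof. by []. Qed.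
Lemma complex_ext z w : complex.Re z = complex.Re w -> complex.Im z = complex.Im w -> z = w.
Proof. by case: z; case: w => /= ? ? ? ? -> ->. Qed.
Lemma conjC_real (r : R) : ((r%:C)%C : R[i])^* = (r%:C)%C.
Proof. by apply: complex_ext; rewrite ?conjRe ?conjIm /= ?oppr0. Qed.
Lemma Re_i z : complex.Re ((- 'i) * z) = complex.Im z.
Proof. rewrite ReM /=. ring. Qed.
Lemma conj_i : ('i : R[i])^* = - 'i.
Proof. by apply: complex_ext; rewrite ?conjRe ?conjIm /= ?oppr0. Qed.
Lemma conjD z w : (z + w)^* = z^* + w^*.
Proof. apply: complex_ext; rewrite ?conjRe ?conjIm ?ReD ?ImD ?conjRe ?conjIm; ring. Qed.
Lemma conjM z w : (z * w)^* = z^* * w^*.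
Proof. apply: complex_ext; rewrite ?conjRe ?conjIm ?ReM ?ImM ?conjRe ?conjIm; ring. Qed.
Lemma conjN z : (- z)^* = - z^*.
Proof. by apply: complex_ext; case: z => a b /=; rewrite ?opprK. Qed.
Lemma conjN1 : (-1 : R[i])^* = -1.
Proof. by apply: complex_ext; rewrite ?conjRe ?conjIm /= ?oppr0. Qed.
Lemma Re_conj_realM c z : complex.Im c = 0 -> complex.Re (c^* * z) = complex.Re c * complex.Re z.
Proof. by move=> h; rewrite ReM conjRe conjIm h oppr0 mul0r subr0. Qed.
End Cx.

Section IP.
Variable R : realType.
Variable H : lmodType R[i].
Variable ip : H -> H -> R[i].
Hypothesis hip : is_inner_product ip.

Definition q (x : H) : R := complex.Re (ip x x).

Lemma ip_lin a x y z : ip (a *: x + y) z = a * ip x z + ip y z.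
Proof. by case: hip. Qed.
Lemma ip_sym x y : ip y x = (ip x y)^*.
Proof. by case: hip. Qed.
Lemma ip_pos x : 0 <= ip x x.
Proof. by case: hip. Qed.
Lemma ip_def x : ip x x = 0 -> x = 0.
Proof. by case: hip => _ _ _; apply. Qed.

Lemma ip0l z : ip 0 z = 0.
Proof.
have := ip_lin 1 0 0 z; rewrite scaler0 addr0 mul1r => h.
by apply: (addrI (ip 0 z)); rewrite addr0 -h.
Qed.
Lemma ipDl x y z : ip (x + y) z = ip x z + ip y z.
Proof. by rewrite -[x]scale1r ip_lin mul1r scale1r. Qed.
Lemma ipZl a x z : ip (a *: x) z = a * ip x z.
Proof. by rewrite -[a *: x]addr0 ip_lin ip0l addr0. Qed.
Lemma ipNl x z : ip (- x) z = - ip x z.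
Proof. by rewrite -scaleN1r ipZl mulN1r. Qed.
Lemma ipBl x y z : ip (x - y) z = ip x z - ip y z.
Proof. by rewrite ipDl ipNl. Qed.
Lemma ip0r z : ip z 0 = 0.
Proof. by rewrite ip_sym ip0l; apply: complex_ext; rewrite ?conjRe ?conjIm /= ?oppr0. Qed.
Lemma ipDr x y z : ip z (x + y) = ip z x + ip z y.
Proof. by rewrite ip_sym ipDl conjD -!ip_sym. Qed.
Lemma ipZr a x z : ip z (a *: x) = a^* * ip z x.
Proof. by rewrite ip_sym ipZl conjM -ip_sym. Qed.
Lemma ipNr x z : ip z (- x) = - ip z x.
Proof. by rewrite -scaleN1r ipZr conjN1 mulN1r. Qed.
Lemma ipBr x y z : ip z (x - y) = ip z x - ip z y.
Proof. by rewrite ipDr ipNr. Qed.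

Lemma ip_real x : ip x x = ((q x)%:C)%C.
Proof.
have [hI hR] := le0c (ip_pos x).
by apply: complex_ext; rewrite /q //= hI.
Qed.
Lemma q_ge0 x : 0 <= q x.
Proof. by have [_ ?] := le0c (ip_pos x). Qed.
Lemma q_eq0 x : q x = 0 -> x = 0.
Proof. by move=> h; apply: ip_def; rewrite ip_real h. Qed.
Lemma q0 : q 0 = 0.
Proof. by rewrite /q ip0l. Qed.
Lemma Re_ipC x y : complex.Re (ip y x) = complex.Re (ip x y).
Proof. by rewrite ip_sym conjRe. Qed.
Lemma qD x y : q (x + y) = q x + q y + 2 * complex.Re (ip x y).
Proof.
rewrite /q ipDl !ipDr !ReD (Re_ipC x y). ring.
Qed.
Lemma qN x : q (- x) = q x.
Proof. by rewrite /q ipNl ipNr opprK. Qed.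
Lemma qB x y : q (x - y) = q x + q y - 2 * complex.Re (ip x y).
Proof. by rewrite qD qN ipNr ReN; ring. Qed.
Lemma qZ (t : R) x : q (((t%:C)%C : R[i]) *: x) = t ^+ 2 * q x.
Proof.
rewrite /q ipZl ipZr conjC_real !ReM /= !ImM /= ip_real /=. ring.
Qed.
Lemma qZc (a : R[i]) x : q (a *: x) = (complex.Re a ^+ 2 + complex.Im a ^+ 2) * q x.
Proof.
rewrite /q ipZl ipZr ip_real !ReM !ImM conjRe conjIm ReC ImC. ring.
Qed.
Lemma q_par x y : q (x + y) + q (x - y) = 2 * q x + 2 * q y.
Proof. rewrite qD qB. ring. Qed.
Lemma q_le2 x y : q (x + y) <= 2 * q x + 2 * q y.
Proof. have := q_par x y; have := q_ge0 (x - y). lra. Qed.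
Lemma q_le2B x y : q (x - y) <= 2 * q x + 2 * q y.
Proof. by have := q_le2 x (- y); rewrite qN. Qed.
Lemma q_sym x y : q (x - y) = q (y - x).
Proof. by rewrite -qN opprB. Qed.

Lemma CS_Re x y : complex.Re (ip x y) ^+ 2 <= q x * q y.
Proof.
have [y0|ypos] := eqVneq (q y) 0.
  by rewrite (q_eq0 y0) ip0r q0 mulr0 /= expr0n.
have qy : 0 < q y by rewrite lt0r ypos q_ge0.
set r := complex.Re (ip x y).
have := q_ge0 (x - ((r / q y)%:C)%C *: y).
rewrite qB qZ ipZr conjC_real ReM ReC ImC mul0r subr0.
rewrite -/r => h.
have h2 : 0 <= q x * q y - r ^+ 2.
  have e : q x * q y - r ^+ 2 = q y * (q x + (r / q y) ^+ 2 * q y - 2 * (r / q y * r)).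
    by field; rewrite ypos.
  by rewrite e mulr_ge0 // ltW.
lra.
Qed.

Lemma Im_ip x y : complex.Im (ip x y) = complex.Re (ip x ('i *: y)).
Proof. by rewrite ipZr conj_i Re_i. Qed.

Definition cvq (u : nat -> H) (l : H) :=
  forall e : R, 0 < e -> exists N, forall n, (N <= n)%N -> q (u n - l) < e.
Definition cauq (u : nat -> H) :=
  forall e : R, 0 < e -> exists N, forall m n, (N <= m)%N -> (N <= n)%N -> q (u m - u n) < e.

Lemma hnorm_q x : hnorm ip x = Num.sqrt (q x). Proof. by []. Qed.

Lemma hnorm_lt x (e : R) : 0 < e -> (hnorm ip x < e) <-> (q x < e ^+ 2).
Proof.
move=> e0; rewrite hnorm_q.
rewrite -{1}(ger0_norm (ltW e0)) -sqrtr_sqr ltr_sqrt //.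
by rewrite exprn_gt0.
Qed.

Lemma cauq_hcauchy u : cauq u -> hcauchy ip u.
Proof.
move=> cu e e0; have [N hN] := cu (e ^+ 2) (exprn_gt0 2 e0).
by exists N => m n hm hn; apply/(hnorm_lt _ e0); apply: hN.
Qed.

Lemma sqrt_pos_lt (e : R) : 0 < e -> 0 < Num.sqrt e.
Proof. by move=> e0; rewrite sqrtr_gt0. Qed.

Lemma hconv_cvq u l : hconverges ip u l -> cvq u l.
Proof.
move=> cu e e0; have [N hN] := cu (Num.sqrt e) (sqrt_pos_lt e0).
exists N => n hn; have := hN n hn; move/(hnorm_lt _ (sqrt_pos_lt e0)).
by rewrite sqr_sqrtr // ltW.
Qed.

Hypothesis hcomp : forall u : nat -> H, hcauchy ip u -> exists l : H, hconverges ip u l.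

Lemma complete u : cauq u -> exists l, cvq u l.
Proof.
move=> /cauq_hcauchy /hcomp [l hl]; exists l; exact: hconv_cvq.
Qed.

Lemma small_eq0 (a : R) : 0 <= a -> (forall e, 0 < e -> a < e) -> a = 0.
Proof.
move=> a0 h; apply/eqP; rewrite eq_le a0 andbT.
apply/negP => /negP; rewrite -ltNge => ha.
by have := h a ha; rewrite ltxx.
Qed.

Lemma cvq_uniq u l l' : cvq u l -> cvq u l' -> l = l'.
Proof.
move=> h1 h2; apply/eqP; rewrite -subr_eq0; apply/eqP/q_eq0.
apply: small_eq0; first exact: q_ge0.
move=> e e0.
have e4 : 0 < e / 4 by rewrite divr_gt0.
have [N1 hN1] := h1 _ e4; have [N2 hN2] := h2 _ e4.
have a := hN1 (maxn N1 N2) (leq_maxl _ _).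
have b := hN2 (maxn N1 N2) (leq_maxr _ _).
have := q_le2B (l - u (maxn N1 N2)) (l' - u (maxn N1 N2)).
rewrite (_ : l - u (maxn N1 N2) - (l' - u (maxn N1 N2)) = l - l'); last by rewrite opprB addrA subrK.
rewrite (q_sym l (u _)) (q_sym l' (u _)). lra.
Qed.

Lemma cvq_map (f : H -> H) u l :
  (forall x y, f (x - y) = f x - f y) -> (forall x, q (f x) <= q x) ->
  cvq u l -> cvq (fun n => f (u n)) (f l).
Proof.
move=> fB fq h e e0; have [N hN] := h e e0; exists N => n hn.
rewrite -fB; exact: le_lt_trans (fq _) (hN n hn).
Qed.

Lemma cvqD u v l m : cvq u l -> cvq v m -> cvq (fun n => u n + v n) (l + m).
Proof.
move=> h1 h2 e e0.
have e4 : 0 < e / 4 by rewrite divr_gt0.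
have [N1 hN1] := h1 _ e4; have [N2 hN2] := h2 _ e4.
exists (maxn N1 N2) => n hn.
have a := hN1 n (leq_trans (leq_maxl _ _) hn).
have b := hN2 n (leq_trans (leq_maxr _ _) hn).
have := q_le2 (u n - l) (v n - m).
rewrite (_ : u n - l + (v n - m) = u n + v n - (l + m)); last by rewrite opprD; rewrite addrACA.
lra.
Qed.

Lemma cvq_ext u v l : (exists N, forall n, (N <= n)%N -> u n = v n) -> cvq u l -> cvq v l.
Proof.
move=> [M hM] h e e0; have [N hN] := h e e0; exists (maxn M N) => n hn.
rewrite -hM; first by apply: hN; exact: leq_trans (leq_maxr _ _) hn.
exact: leq_trans (leq_maxl _ _) hn.
Qed.

Lemma cvq_shift u l : cvq u l -> cvq (fun n => u n.+1) l.
Proof.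
move=> h e e0; have [N hN] := h e e0; exists N => n hn; apply: hN; exact: leqW.
Qed.

Lemma cvq_unshift u l : cvq (fun n => u n.+1) l -> cvq u l.
Proof.
move=> h e e0; have [N hN] := h e e0; exists N.+1 => n hn.
case: n hn => // n hn; exact: hN.
Qed.

Lemma cvq_cst l : cvq (fun _ => l) l.
Proof. by move=> e e0; exists 0%N => n _; rewrite subrr q0. Qed.

Lemma cvqZ (a : R[i]) u l : cvq u l -> cvq (fun n => a *: u n) (a *: l).
Proof.
move=> h e e0.
set c := complex.Re a ^+ 2 + complex.Im a ^+ 2.
have c0 : 0 <= c by rewrite addr_ge0 // sqr_ge0.
have e' : 0 < e / (c + 1) by rewrite divr_gt0 // ltr_wpDl.
have [N hN] := h _ e'; exists N => n hn.
rewrite -scalerBr qZc -/c.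
have := hN n hn; have := q_ge0 (u n - l).
move: (q (u n - l)) => t t0 ht.
have -> : e = e / (c + 1) * (c + 1) by field; rewrite gt_eqF // ltr_wpDl.
move: ht; move: (e / (c + 1)) => f ht.
nra.
Qed.

Lemma cvq_Re_small u l y (c : R) :
  cvq u l -> (forall n, complex.Re (ip (u n) y) = c) -> complex.Re (ip l y) = c.
Proof.
move=> h hc.
have : complex.Re (ip (l - u 0%N) y) ^+ 2 = 0 -> True by [].
suff : (complex.Re (ip l y) - c) ^+ 2 = 0.
  by move/eqP; rewrite sqrf_eq0 subr_eq0 => /eqP.
apply: small_eq0; first exact: sqr_ge0.
move=> e e0.
have e' : 0 < e / (q y + 1) by rewrite divr_gt0 // ltr_wpDl // q_ge0.
have [N hN] := h _ e'.
have hh := CS_Re (l - u N) y.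
rewrite ipBl ReD ReN hc in hh.
rewrite q_sym in hh.
have hq := hN N (leqnn N).
have qy := q_ge0 y.
apply: le_lt_trans hh _.
have -> : e = e / (q y + 1) * (q y + 1) by field; rewrite gt_eqF // ltr_wpDl.
rewrite [X in _ < X]mulrC. 
have hq0 := q_ge0 (u N - l).
nra.
Qed.

Lemma cvq_q u l : cvq u l ->
  forall e : R, 0 < e -> exists N, forall n, (N <= n)%N -> `| q (u n) - q l | < e.
Proof.
move=> h e e0.
set d := Num.min (e / 2) ((e / 4) ^+ 2 / (q l + 1)).
have d0 : 0 < d.
  by rewrite lt_min divr_gt0 //= divr_gt0 // ?exprn_gt0 ?divr_gt0 // ltr_wpDl // q_ge0.
have [N hN] := h d d0; exists N => n hn.
have hq := hN n hn.
have e1 : q (u n - l) < e / 2 by apply: lt_le_trans hq _; rewrite ge_min lexx.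
have e2 : q (u n - l) * (q l + 1) < (e / 4) ^+ 2.
  have ql1 : 0 < q l + 1 by rewrite ltr_wpDl // q_ge0.
  rewrite -ltr_pdivlMr //; apply: lt_le_trans hq _; rewrite ge_min lexx orbT //.
have cs := CS_Re (u n - l) l.
have ed : q (u n) - q l = q (u n - l) + 2 * complex.Re (ip (u n - l) l).
  have -> : u n = (u n - l) + l by rewrite subrK.
  rewrite qD addrK. ring.
rewrite ed.
have ql := q_ge0 l; have qd := q_ge0 (u n - l).
set r := complex.Re (ip (u n - l) l) in cs ed *.
have r2 : r ^+ 2 < (e / 4) ^+ 2.
  apply: le_lt_trans cs _. apply: le_lt_trans e2. nra.
have : `| r | < e / 4.
  rewrite -(ltr_pXn2r (n:=2)) //; first by rewrite real_normK ?num_real.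
  by rewrite nnegrE. by rewrite nnegrE; apply: ltW; rewrite divr_gt0.
rewrite ltr_norml => /andP [ra rb].
rewrite ltr_norml; apply/andP; split; lra.
Qed.

End IP.

Section RealSeq.
Variable R : realType.
Definition rcv (a : nat -> R) (s : R) :=
  forall e : R, 0 < e -> exists N, forall n, (N <= n)%N -> `| a n - s | < e.

Lemma mono_le (a : nat -> R) : (forall n, a n <= a n.+1) -> forall n m, (n <= m)%N -> a n <= a m.
Proof.
move=> h n m; elim: m => [|m IH]; first by rewrite leqn0 => /eqP ->.
rewrite leq_eqVlt => /orP [/eqP -> //|]; rewrite ltnS => /IH hm.
exact: le_trans hm (h m).
Qed.

Lemma mono_cv (a : nat -> R) (B : R) : (forall n, a n <= a n.+1) -> (forall n, a n <= B) ->
  exists s, rcv a s /\ (forall n, a n <= s).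
Proof.
move=> hm hB.
pose E : set R := fun r => exists n, r = a n.
have hE : has_sup E.
  split; first by exists (a 0%N), 0%N.
  by exists B => r [n ->]; apply: hB.
have ub : forall n, a n <= sup E by move=> n; apply: sup_upper_bound => //; exists n.
exists (sup E); split => // e e0.
have [r [N ->] hr] := sup_adherent e0 hE.
exists N => n hn.
have h1 := mono_le hm hn; have h2 := ub n.
rewrite ler0_norm ?subr_le0 //; lra.
Qed.

Lemma rcv_uniq a s t : rcv a s -> rcv a t -> s = t.
Proof.
move=> h1 h2; apply/eqP; rewrite -subr_eq0 -normr_eq0; apply/eqP.
apply: small_eq0 => // e e0.
have e2 : 0 < e / 2 by rewrite divr_gt0.
have [N1 hN1] := h1 _ e2; have [N2 hN2] := h2 _ e2.
have a1 := hN1 (maxn N1 N2) (leq_maxl _ _).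
have a2 := hN2 (maxn N1 N2) (leq_maxr _ _).
have := ler_normB (a (maxn N1 N2) - t) (a (maxn N1 N2) - s).
rewrite (_ : a (maxn N1 N2) - t - (a (maxn N1 N2) - s) = s - t); last by ring.
lra.
Qed.

Lemma rcv_le a s b : rcv a s -> (exists N, forall n, (N <= n)%N -> a n <= b) -> s <= b.
Proof.
move=> h [M hM]; rewrite leNgt; apply/negP => hb.
have e0 : 0 < s - b by rewrite subr_gt0.
have [N hN] := h _ e0.
have := hN (maxn M N) (leq_maxr _ _); have := hM (maxn M N) (leq_maxl _ _).
move=> h1; rewrite ltr_norml => /andP [h2 _]. lra.
Qed.

Lemma rcv_ge a s b : rcv a s -> (exists N, forall n, (N <= n)%N -> b <= a n) -> b <= s.
Proof.
move=> h [M hM]; rewrite leNgt; apply/negP => hb.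
have e0 : 0 < b - s by rewrite subr_gt0.
have [N hN] := h _ e0.
have := hN (maxn M N) (leq_maxr _ _); have := hM (maxn M N) (leq_maxl _ _).
move=> h1; rewrite ltr_norml => /andP [_ h2]. lra.
Qed.

Lemma rcv_cauchy a s : rcv a s ->
  forall e, 0 < e -> exists N, forall m n, (N <= m)%N -> (N <= n)%N -> `| a m - a n | < e.
Proof.
move=> h e e0; have e2 : 0 < e / 2 by rewrite divr_gt0.
have [N hN] := h _ e2; exists N => m n hm hn.
have := hN m hm; have := hN n hn; have := ler_normB (a m - s) (a n - s).
rewrite (_ : a m - s - (a n - s) = a m - a n); last by ring.
lra.
Qed.

Lemma arch_inv (e : R) : 0 < e -> exists N : nat, N.+1%:R^-1 < e.
Proof. by move=> e0; have [k hk] := ltr_add_invr e0; exists k; rewrite add0r in hk. Qed.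

Lemma inv_le (m n : nat) : (m <= n)%N -> n.+1%:R^-1 <= m.+1%:R^-1 :> R.
Proof.
move=> h; rewrite lef_pV2 ?posrE ?ltr0Sn // ler_nat ltnS //.
Qed.

End RealSeq.

Lemma subsub (V : zmodType) (u v w : V) : u - v - (u - w) = w - v.
Proof. by rewrite opprB addrC addrA subrK. Qed.

Lemma zswap (V : zmodType) (a b c d : V) : a + b = c + d -> a - c = d - b.
Proof. move=> h; apply/eqP; by rewrite subr_eq addrAC [d + c]addrC -h addrK. Qed.

Section Lin.
Variable R : realType.
Variable H : lmodType R[i].
Variable f : H -> H.
Hypothesis hf : is_linear_op f.
Lemma lin0 : f 0 = 0.
Proof.
have := hf 1 0 0; rewrite scaler0 addr0 scale1r => h.
by apply: (addrI (f 0)); rewrite addr0 -h.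
Qed.
Lemma linD x y : f (x + y) = f x + f y.
Proof. by rewrite -[x]scale1r hf !scale1r. Qed.
Lemma linZ a x : f (a *: x) = a *: f x.
Proof. by rewrite -[a *: x]addr0 hf lin0 addr0. Qed.
Lemma linN x : f (- x) = - f x.
Proof. by rewrite -scaleN1r linZ scaleN1r. Qed.
Lemma linB x y : f (x - y) = f x - f y.
Proof. by rewrite linD linN. Qed.
End Lin.

Section Proj.
Variable R : realType.
Variable H : lmodType R[i].
Variable ip : H -> H -> R[i].
Hypothesis hip : is_inner_product ip.
Hypothesis hcomp : forall u : nat -> H, hcauchy ip u -> exists l : H, hconverges ip u l.
Variable V : H -> H.
Hypothesis hV : is_isometry_op ip V.

Let Vlin : is_linear_op V. Proof. by case: hV. Qed.
Lemma qV x : q ip (V x) = q ip x.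
Proof. by case: hV => _ h; rewrite /q h. Qed.

Lemma half1 : ((2%:R)^-1 + (2%:R)^-1 : R[i]) = 1.
Proof. have h : (2%:R : R[i]) != 0 by rewrite pnatr_eq0. by rewrite -[RHS](mulVf h) mulr_natr mulr2n. Qed.

Lemma half_sum (x a b : H) :
  (x - V a) + (x - V b) = let w := x - V (((2%:R)^-1 : R[i]) *: (a + b)) in w + w.
Proof.
rewrite /= (linZ Vlin) (linD Vlin).
by rewrite [RHS]addrACA -opprD -scalerDl half1 scale1r [LHS]addrACA -opprD.
Qed.
Lemma le_eps (a b : R) : (forall e, 0 < e -> a <= b + e) -> a <= b.
Proof.
move=> h; rewrite leNgt; apply/negP => hab.
have e0 : 0 < (a - b) / 2 by rewrite divr_gt0 // subr_gt0.
have := h _ e0. lra.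
Qed.

Lemma proj_thm x : exists y, forall z, ip (x - V y) (V z) = 0.
Proof.
pose E : set R := fun r => exists y, r = q ip (x - V y).
have hE : has_inf E.
  split; first by exists (q ip (x - V 0)), 0.
  by exists 0 => r [y ->]; apply: q_ge0.
set d := inf E.
have dlb : forall y, d <= q ip (x - V y).
  by move=> y; apply: ge_inf; [case: hE | exists y].
have hn : forall n : nat, exists y, q ip (x - V y) < d + n.+1%:R^-1.
  move=> n; have p : 0 < n.+1%:R^-1 :> R by rewrite invr_gt0 ltr0Sn.
  have [r [y ->] hr] := inf_adherent p hE.
  by exists y.
have [ys hys] := choice hn.
clearbody d.
have cau : cauq ip ys.
  move=> e e0.
  have e4 : 0 < e / 4 by rewrite divr_gt0.
  have [N hN] := arch_inv e4.
  exists N => m n hm hn'.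
  have h1 := hys m; have h2 := hys n.
  have i1 := inv_le R hm; have i2 := inv_le R hn'.
  have hpar := q_par hip (x - V (ys m)) (x - V (ys n)).
  rewrite half_sum /= qD // in hpar.
  move: hpar.
  set w := x - V (((2%:R)^-1 : R[i]) *: (ys m + ys n)).
  have -> : complex.Re (ip w w) = q ip w by [].
  have -> : x - V (ys m) - (x - V (ys n)) = V (ys n - ys m).
    by rewrite (linB Vlin) subsub.
  rewrite qV (q_sym hip (ys n) (ys m)) => hpar.
  have hd : d <= q ip w := dlb _.
  move: hpar hd h1 h2 i1 i2 hN.
  move: (q ip w) (q ip (ys m - ys n)) (q ip (x - V (ys m))) (q ip (x - V (ys n))) => a b c f.
  move: (m.+1%:R^-1) (n.+1%:R^-1) (N.+1%:R^-1) => r1 r2 r3.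
  clear. move=> *. lra.
have [y hy] := complete hcomp cau.
have cv : cvq ip (fun n => x - V (ys n)) (x - V y).
  move=> e e0; have [N hN] := hy e e0; exists N => n hnN.
  have -> : x - V (ys n) - (x - V y) = V (y - ys n).
    by rewrite (linB Vlin) subsub.
  by rewrite qV (q_sym hip y); apply: hN.
have hle : q ip (x - V y) <= d.
  apply: le_eps => e e0.
  have e2 : 0 < e / 2 by rewrite divr_gt0.
  have [N1 hN1] := cvq_q hip cv e2.
  have [N2 hN2] := arch_inv e2.
  have a1 := hN1 (maxn N1 N2) (leq_maxl _ _).
  have a2 := hys (maxn N1 N2).
  have a3 := inv_le R (leq_maxr N1 N2).
  move: a1; rewrite ltr_norml => /andP [b1 b2].
  move: b1 b2 a2 a3 hN2.
  move: (q ip (x - V (ys (maxn N1 N2)))) (q ip (x - V y)) ((maxn N1 N2).+1%:R^-1) (N2.+1%:R^-1) => a b c f.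
  move=> *. lra.
exists y.
set e := x - V y.
have hr : forall z, complex.Re (ip e (V z)) = 0.
  move=> z.
  set r := complex.Re (ip e (V z)).
  set s := q ip (V z).
  have s0 : 0 <= s by apply: q_ge0.
  set t := r / (s + 1).
  have hd := dlb (y + ((t%:C)%C : R[i]) *: z).
  have : x - V (y + ((t%:C)%C : R[i]) *: z) = e - ((t%:C)%C : R[i]) *: V z.
    by rewrite (linD Vlin) (linZ Vlin) opprD addrA.
  move=> eq; rewrite eq qB // qZ // ipZr // Re_conj_realM // /= -/r -/s in hd.
  have key : (s + 1) ^+ 2 * (t ^+ 2 * s - 2 * (t * r)) = - (r ^+ 2 * (s + 2)).
    rewrite /t; field; rewrite gt_eqF // ltr_wpDl //.
  have hpos : 0 <= t ^+ 2 * s - 2 * (t * r).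
    move: hd hle; rewrite -/e. clearbody t s r. move: (q ip e) => a. move=> *. lra.
  have : 0 <= - (r ^+ 2 * (s + 2)) by rewrite -key mulr_ge0 // sqr_ge0.
  move=> h3.
  have r2 : r ^+ 2 = 0.
    apply/eqP; rewrite eq_le sqr_ge0 andbT.
    have : 0 <= r ^+ 2 by apply: sqr_ge0.
    nra.
  by move/eqP: r2; rewrite sqrf_eq0 => /eqP.
move=> z.
have hi : complex.Im (ip e (V z)) = 0.
  by rewrite Im_ip // -(linZ Vlin) hr.
by apply: complex_ext; rewrite ?hr ?hi.
Qed.
End Proj.

Record subdata (R : realType) (H : lmodType R[i]) := SubData {
  sd_P : H -> Prop;
  sd_0 : sd_P 0;
  sd_lin : forall (a : R[i]) x y, sd_P x -> sd_P y -> sd_P (a *: x + y) }.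

Section Sub.
Variable R : realType.
Variable H : lmodType R[i].
Variable ip : H -> H -> R[i].
Hypothesis hip : is_inner_product ip.
Hypothesis hcomp : forall u : nat -> H, hcauchy ip u -> exists l : H, hconverges ip u l.
Variable D : subdata H.
Let P := sd_P D.
Let P0 : P 0 := sd_0 D.
Let Plin : forall (a : R[i]) x y, P x -> P y -> P (a *: x + y) := @sd_lin _ _ D.
Hypothesis Pclosed : forall u l, (forall n, P (u n)) -> cvq ip u l -> P l.

Definition Pb : {pred H} := fun x => `[< P x >].
Fact Pb_closed : submod_closed Pb.
Proof.
split; first by apply/asboolP.
by move=> a u v /asboolP Pu /asboolP Pv; apply/asboolP; apply: Plin.
Qed.
HB.instance Definition _ := GRing.isSubmodClosed.Build R[i] H Pb Pb_closed.
Inductive subsp : predArgType := SubSp u & u \in Pb.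
Definition sv w : H := let: SubSp u _ := w in u.
HB.instance Definition _ := [isSub of subsp for sv].
HB.instance Definition _ := [Choice of subsp by <:].
HB.instance Definition _ := [SubChoice_isSubZmodule of subsp by <:].
HB.instance Definition _ := [SubZmodule_isSubLmodule of subsp by <:].

Lemma inPb y : P y -> y \in Pb.
Proof. by move=> h; apply/asboolP. Qed.
Definition mkS (y : H) (h : P y) : subsp := SubSp (inPb h).
Lemma mkSK y (h : P y) : sv (mkS h) = y. Proof. by []. Qed.
Lemma svP (w : subsp) : P (sv w).
Proof. by case: w => u hu; apply/asboolP. Qed.
Lemma sv_inj : injective sv.
Proof. exact: val_inj. Qed.
Lemma svZD a (x y : subsp) : sv (a *: x + y) = a *: sv x + sv y.
Proof. by []. Qed.
Lemma svB (x y : subsp) : sv (x - y) = sv x - sv y.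
Proof. by []. Qed.
Lemma sv0 : sv 0 = 0.
Proof. by []. Qed.

Definition ipS (x y : subsp) : R[i] := ip (sv x) (sv y).

Lemma ipS_inner : is_inner_product ipS.
Proof.
split.
- by move=> a x y z; rewrite /ipS svZD ip_lin.
- by move=> x y; rewrite /ipS ip_sym.
- by move=> x; rewrite /ipS ip_pos.
- by move=> x h; apply: sv_inj; rewrite sv0; apply: (ip_def hip).
Qed.

Lemma hnormS x : hnorm ipS x = hnorm ip (sv x).
Proof. by []. Qed.

Lemma subsp_hilbert : is_hilbert_sp ipS.
Proof.
split; first exact: ipS_inner.
move=> u hu.
have hu' : hcauchy ip (fun n => sv (u n)).
  by move=> e e0; have [N hN] := hu e e0; exists N => m n hm hn; rewrite -svB -hnormS; apply: hN.
have [l hl] := hcomp hu'.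
have Pl : P l.
  by apply: (Pclosed (u := fun n => sv (u n))); [move=> n; apply: svP | apply: hconv_cvq].
exists (mkS Pl) => e e0; have [N hN] := hl e e0; exists N => n hn.
by rewrite hnormS svB mkSK; apply: hN.
Qed.
End Sub.

Section Main.
Variable R : realType.
Variable H : lmodType R[i].
Variable ip : H -> H -> R[i].
Hypothesis hip : is_inner_product ip.
Hypothesis hcomp : forall u : nat -> H, hcauchy ip u -> exists l : H, hconverges ip u l.
Variables V1 V2 : H -> H.
Hypothesis hV1 : is_isometry_op ip V1.
Hypothesis hV2 : is_isometry_op ip V2.
Hypothesis hcomm : forall x, V1 (V2 x) = V2 (V1 x).
Hypothesis hran : same_range V1 V2.

Let V1lin : is_linear_op V1. Proof. by case: hV1. Qed.
Let V2lin : is_linear_op V2. Proof. by case: hV2. Qed.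
Lemma ipV1 x y : ip (V1 x) (V1 y) = ip x y. Proof. by case: hV1. Qed.
Lemma ipV2 x y : ip (V2 x) (V2 y) = ip x y. Proof. by case: hV2. Qed.
Lemma qV1 x : q ip (V1 x) = q ip x. Proof. by rewrite /q ipV1. Qed.
Lemma qV2 x : q ip (V2 x) = q ip x. Proof. by rewrite /q ipV2. Qed.

Lemma V1_inj : injective V1.
Proof.
move=> x y h; apply/eqP; rewrite -subr_eq0; apply/eqP; apply: (q_eq0 hip).
by rewrite -qV1 (linB V1lin) h subrr q0.
Qed.

Definition Lorth (l : H) := forall z, ip l (V1 z) = 0.

Lemma Lorth0 : Lorth 0. Proof. by move=> z; rewrite ip0l. Qed.
Lemma Lorth_lin a x y : Lorth x -> Lorth y -> Lorth (a *: x + y).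
Proof. by move=> hx hy z; rewrite (ip_lin hip) hx hy mulr0 addr0. Qed.

Definition A (x : H) : H := projT1 (cid (proj_thm hip hcomp hV1 x)).
Definition P (x : H) : H := x - V1 (A x).

Lemma P_orth x : Lorth (P x).
Proof. by move=> z; rewrite /P /A; case: cid => y hy /=; apply: hy. Qed.
Lemma decomp x : x = P x + V1 (A x).
Proof. by rewrite /P subrK. Qed.

Lemma decomp_uniq x l y : Lorth l -> x = l + V1 y -> P x = l /\ A x = y.
Proof.
move=> hl hx.
have e : P x - l = V1 (y - A x).
  by rewrite (linB V1lin); apply: zswap; rewrite -decomp.
have hPl : P x - l = 0.
  apply: (ip_def hip); rewrite {2}e (ipBl hip) (P_orth x (y - A x)) (hl (y - A x)) subrr //.
have hP : P x = l by apply/eqP; rewrite -subr_eq0 hPl.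
split=> //.
apply: V1_inj; apply/eqP; rewrite eq_sym -subr_eq0 -(linB V1lin) -e hPl //.
Qed.

Lemma AV1 y : A (V1 y) = y.
Proof. by have [] := @decomp_uniq (V1 y) 0 y Lorth0; rewrite ?add0r. Qed.
Lemma PV1 y : P (V1 y) = 0.
Proof. by have [] := @decomp_uniq (V1 y) 0 y Lorth0; rewrite ?add0r. Qed.
Lemma A_L l : Lorth l -> A l = 0.
Proof. by move=> hl; have [] := @decomp_uniq l l 0 hl; rewrite ?(lin0 V1lin) ?addr0. Qed.
Lemma P_L l : Lorth l -> P l = l.
Proof. by move=> hl; have [] := @decomp_uniq l l 0 hl; rewrite ?(lin0 V1lin) ?addr0. Qed.

Lemma AP_lin a x y : P (a *: x + y) = a *: P x + P y /\ A (a *: x + y) = a *: A x + A y.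
Proof.
apply: decomp_uniq; first by apply: Lorth_lin; apply: P_orth.
rewrite (V1lin a) addrACA -scalerDr -!decomp //.
Qed.
Lemma Alin : is_linear_op A. Proof. by move=> a x y; case: (AP_lin a x y). Qed.
Lemma Plin : is_linear_op P. Proof. by move=> a x y; case: (AP_lin a x y). Qed.

Lemma q_decomp x : q ip x = q ip (P x) + q ip (A x).
Proof.
by rewrite {1}(decomp x) (qD hip) qV1 P_orth /= mulr0 addr0.
Qed.
Lemma qA_le x : q ip (A x) <= q ip x.
Proof. by rewrite (q_decomp x) lerDr q_ge0. Qed.
Lemma qP_le x : q ip (P x) <= q ip x.
Proof. by rewrite (q_decomp x) lerDl q_ge0. Qed.


Lemma iter_lin (f : H -> H) n : is_linear_op f -> is_linear_op (iter n f).
Proof.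
move=> hf; elim: n => [|n IH] a x y //=.
by rewrite IH hf.
Qed.
Lemma iterV1_lin n : is_linear_op (iter n V1). Proof. exact: iter_lin. Qed.
Lemma iterA_lin n : is_linear_op (iter n A). Proof. exact: iter_lin Alin. Qed.

Lemma q_iterV1 n y : q ip (iter n V1 y) = q ip y.
Proof. by elim: n => //= n IH; rewrite qV1. Qed.

Lemma ip_iterV1 n x y : ip (iter n V1 x) (iter n V1 y) = ip x y.
Proof. by elim: n => //= n IH; rewrite ipV1. Qed.

Lemma q_expand x N : q ip x = \sum_(0 <= k < N) q ip (P (iter k A x)) + q ip (iter N A x).
Proof.
elim: N => [|N IH]; first by rewrite big_nil add0r.
by rewrite big_nat_recr //= -addrA -q_decomp.
Qed.

Lemma cross0 l w : Lorth l -> complex.Re (ip l (V1 w)) = 0.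
Proof. by move=> hl; rewrite hl. Qed.

Lemma pyth_iter j y : q ip (y - iter j V1 (iter j A y)) = q ip y - q ip (iter j A y).
Proof.
elim: j y => [|j IH] y; first by rewrite /= !subrr q0.
rewrite [iter j.+1 A y]iterSr [iter j.+1 V1 _]iterS.
have -> : y - V1 (iter j V1 (iter j A (A y))) = P y + V1 (A y - iter j V1 (iter j A (A y))).
  by rewrite (linB V1lin) addrA -decomp.
rewrite (qD hip) (cross0 _ (P_orth y)) mulr0 addr0 qV1 IH.
rewrite [q ip y]q_decomp. 
by rewrite addrA.
Qed.

Lemma AnV1n n N y : (n <= N)%N -> iter n A (iter N V1 y) = iter (N - n) V1 y.
Proof.
elim: n => [|n IH] hn; first by rewrite subn0.
rewrite iterS IH; last by apply: ltnW.
by rewrite -(subnSK hn) iterS AV1.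
Qed.

Definition kk N x := iter N V1 (iter N A x).
Definition cc N x := q ip (iter N A x).

Lemma q_kk N x : q ip (kk N x) = cc N x.
Proof. by rewrite /kk q_iterV1. Qed.

Lemma cc_dec N x : cc N.+1 x <= cc N x.
Proof. by rewrite /cc iterS qA_le. Qed.

Lemma kk_diff N M x : (N <= M)%N -> q ip (kk N x - kk M x) = cc N x - cc M x.
Proof.
move=> hNM.
have e1 : iter M V1 (iter M A x) = iter N V1 (iter (M - N) V1 (iter (M - N) A (iter N A x))).
  by rewrite -!iterD subnKC // subnK.
rewrite /kk e1 -(linB (iterV1_lin N)) q_iterV1 pyth_iter /cc.
by rewrite -iterD subnK.
Qed.

Lemma cc_cv (x : H) : exists s, rcv (fun N => cc N x) s.
Proof.
have h1 : forall N, - cc N x <= - cc N.+1 x by move=> N; rewrite lerN2 cc_dec.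
have h2 : forall N, - cc N x <= 0 by move=> N; rewrite oppr_le0 q_ge0.
have [s [hs _]] := mono_cv h1 h2.
exists (- s) => e e0; have [N hN] := hs e e0; exists N => n hn.
by rewrite -normrN opprB addrC; apply: hN.
Qed.

Lemma cc_anti (x : H) m n : (m <= n)%N -> cc n x <= cc m x.
Proof.
move=> h.
have h1 : forall N, - cc N x <= - cc N.+1 x by move=> N; rewrite lerN2 cc_dec.
by have := mono_le h1 h; rewrite lerN2.
Qed.

Lemma kk_cau (x : H) : cauq ip (fun N => kk N x).
Proof.
have [s hs] := cc_cv x.
move=> e e0; have [N hN] := rcv_cauchy hs e0; exists N => m n hm hn.
have [hmn|hnm] := leqP m n.
  by rewrite kk_diff //; have := hN m n hm hn; rewrite ger0_norm // subr_ge0 cc_anti.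
rewrite q_sym // kk_diff; last exact: ltnW.
by have := hN n m hn hm; rewrite ger0_norm // subr_ge0 cc_anti // ltnW.
Qed.


Definition U2H (x : H) : H := projT1 (cid (complete hcomp (kk_cau x))).
Lemma U2H_cv x : cvq ip (fun N => kk N x) (U2H x).
Proof. by rewrite /U2H; case: cid. Qed.

Lemma cc_to_U2 x : rcv (fun N => cc N x) (q ip (U2H x)).
Proof.
move=> e e0; have [N hN] := cvq_q hip (U2H_cv x) e0; exists N => n hn.
by rewrite -q_kk; apply: hN.
Qed.

Lemma series_U1 x : rcv (fun N => \sum_(0 <= k < N) q ip (P (iter k A x))) (q ip x - q ip (U2H x)).
Proof.
move=> e e0; have [N hN] := cc_to_U2 x e0; exists N => n hn.
have := hN n hn; rewrite (q_expand x n) /cc.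
move: (\sum_(0 <= k < n) q ip (P (iter k A x))) => S.
by rewrite -normrN; congr (_ < _); congr (`| _ |); rewrite /cc; ring.
Qed.

Definition Kset (y : H) := forall n, P (iter n A y) = 0.

Lemma PAn_lin n : is_linear_op (fun y => P (iter n A y)).
Proof. by move=> a x y; rewrite (iterA_lin n) Plin. Qed.

Lemma qPAn_le n y : q ip (P (iter n A y)) <= q ip y.
Proof.
apply: le_trans (qP_le _) _.
elim: n => //= n IH; exact: le_trans (qA_le _) IH.
Qed.

Lemma Kset0 : Kset 0.
Proof. by move=> n; rewrite (lin0 (PAn_lin n)). Qed.
Lemma Kset_lin a x y : Kset x -> Kset y -> Kset (a *: x + y).
Proof. by move=> hx hy n; rewrite (PAn_lin n) hx hy scaler0 addr0. Qed.

Lemma cvq_PAn n u l : cvq ip u l -> cvq ip (fun k => P (iter n A (u k))) (P (iter n A l)).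
Proof.
move=> h; apply: (cvq_map (f := fun y => P (iter n A y))) h.
  by move=> x y; rewrite (linB (PAn_lin n)).
by move=> x; apply: qPAn_le.
Qed.

Lemma Kclosed u l : (forall n, Kset (u n)) -> cvq ip u l -> Kset l.
Proof.
move=> hu h m.
have h1 := cvq_PAn m h.
have h2 : cvq ip (fun k => P (iter m A (u k))) 0.
  by apply: (cvq_ext _ (cvq_cst hip 0)); exists 0%N => n _; rewrite hu.
exact: (cvq_uniq hip h1 h2).
Qed.

Lemma Lclosed u l : (forall n, Lorth (u n)) -> cvq ip u l -> Lorth l.
Proof.
move=> hu h z.
have hr : forall w, complex.Re (ip l (V1 w)) = 0.
  move=> w; apply: (cvq_Re_small hip h) => n.
  by rewrite hu.
apply: complex_ext; first by rewrite hr.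
by rewrite Im_ip // -(linZ V1lin) hr.
Qed.

Lemma U2H_K x : Kset (U2H x).
Proof.
move=> m.
have h1 := cvq_PAn m (U2H_cv x).
have h2 : cvq ip (fun k => P (iter m A (kk k x))) 0.
  apply: (cvq_ext _ (cvq_cst hip 0)); exists m.+1 => n hn.
  rewrite /kk AnV1n; last exact: ltnW.
  by rewrite -(subnSK hn) iterS PV1.
exact: (cvq_uniq hip h1 h2).
Qed.

Lemma K_fix y : Kset y -> forall N, kk N y = y.
Proof.
move=> hy N; apply/eqP; rewrite eq_sym -subr_eq0; apply/eqP; apply: (q_eq0 hip).
rewrite /kk pyth_iter (q_expand y N) big1_seq ?add0r ?subrr //.
by move=> i _; rewrite hy q0.
Qed.

Lemma U2H_Kid y : Kset y -> U2H y = y.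
Proof.
move=> hy; apply: (cvq_uniq hip) (U2H_cv y) _.
by apply: (cvq_ext _ (cvq_cst hip y)); exists 0%N => n _; rewrite K_fix.
Qed.

Lemma kk_lin N : is_linear_op (kk N).
Proof. by move=> a x y; rewrite /kk (iterA_lin N) (iterV1_lin N). Qed.

Lemma U2H_lin : is_linear_op U2H.
Proof.
move=> a x y; apply: (cvq_uniq hip) (U2H_cv (a *: x + y)) _.
apply: (cvq_ext _ (cvqD hip (cvqZ hip a (U2H_cv x)) (U2H_cv y))).
by exists 0%N => n _; rewrite kk_lin.
Qed.

Definition U (x : H) : H := A (V2 x).
Lemma V1U x : V1 (U x) = V2 x.
Proof. by rewrite /U; case: hran => _ /(_ x) [y <-]; rewrite AV1. Qed.
Lemma U_lin : is_linear_op U.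
Proof. by move=> a x y; rewrite /U V2lin Alin. Qed.
Lemma ipU x y : ip (U x) (U y) = ip x y.
Proof. by rewrite -ipV1 !V1U ipV2. Qed.
Lemma qU x : q ip (U x) = q ip x.
Proof. by rewrite /q ipU. Qed.
Lemma U_inj : injective U.
Proof.
move=> x y h; apply/eqP; rewrite -subr_eq0; apply/eqP; apply: (q_eq0 hip).
by rewrite -qU (linB U_lin) h subrr q0.
Qed.
Lemma U_surj y : exists x, U x = y.
Proof.
case: hran => /(_ y) [x hx] _; exists x.
by apply: V1_inj; rewrite V1U.
Qed.
Lemma UV1 x : U (V1 x) = V1 (U x).
Proof. by apply: V1_inj; rewrite V1U -hcomm V1U. Qed.
Lemma U_Lorth l : Lorth l -> Lorth (U l).
Proof.
move=> hl z; have [w <-] := U_surj z.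
by rewrite -UV1 ipU hl.
Qed.
Lemma Uinv_Lorth m : Lorth (U m) -> Lorth m.
Proof. by move=> h z; rewrite -ipU UV1 h. Qed.
Lemma PAU x : P (U x) = U (P x) /\ A (U x) = U (A x).
Proof.
apply: decomp_uniq; first by apply: U_Lorth; apply: P_orth.
by rewrite -UV1 -(linD U_lin) -decomp.
Qed.
Lemma iterAU n x : iter n A (U x) = U (iter n A x).
Proof. by elim: n => //= n ->; case: (PAU (iter n A x)). Qed.
Lemma PAnU n x : P (iter n A (U x)) = U (P (iter n A x)).
Proof. by rewrite iterAU; case: (PAU (iter n A x)). Qed.
Lemma iterV1U n x : iter n V1 (U x) = U (iter n V1 x).
Proof. by elim: n => //= n ->; rewrite UV1. Qed.
Lemma kkU N x : kk N (U x) = U (kk N x).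
Proof. by rewrite /kk iterAU iterV1U. Qed.

Lemma U2H_U x : U2H (U x) = U (U2H x).
Proof.
apply: (cvq_uniq hip) (U2H_cv (U x)) _.
apply: (cvq_ext _ (cvq_map (f := U) _ _ (U2H_cv x))).
- by exists 0%N => n _; rewrite kkU.
- by move=> y z; rewrite (linB U_lin).
- by move=> y; rewrite qU.
Qed.

Lemma kkV1 N x : kk N.+1 (V1 x) = V1 (kk N x).
Proof. by rewrite /kk [iter N.+1 A _]iterSr AV1 iterS. Qed.

Lemma U2H_V1 x : U2H (V1 x) = V1 (U2H x).
Proof.
have h1 := cvq_shift (U2H_cv (V1 x)).
apply: (cvq_uniq hip) h1 _.
apply: (cvq_ext _ (cvq_map (f := V1) _ _ (U2H_cv x))).
- by exists 0%N => n _; rewrite kkV1.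
- by move=> y z; rewrite (linB V1lin).
- by move=> y; rewrite qV1.
Qed.

Lemma U2H_V2 x : U2H (V2 x) = V2 (U2H x).
Proof. by rewrite -V1U U2H_V1 U2H_U V1U. Qed.

Lemma PA_V1_0 x : P (iter 0 A (V1 x)) = 0.
Proof. exact: PV1. Qed.
Lemma PA_V1_S n x : P (iter n.+1 A (V1 x)) = P (iter n A x).
Proof. by rewrite iterSr AV1. Qed.
Lemma PA_V2_0 x : P (iter 0 A (V2 x)) = 0.
Proof. by rewrite /= -V1U PV1. Qed.
Lemma PA_V2_S n x : P (iter n.+1 A (V2 x)) = U (P (iter n A x)).
Proof. by rewrite iterSr -PAnU. Qed.

Lemma K_V1 x : Kset x -> Kset (V1 x).
Proof. by move=> hx [|n]; [apply: PA_V1_0 | rewrite PA_V1_S]. Qed.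
Lemma K_A x : Kset x -> Kset (A x).
Proof. by move=> hx n; rewrite -iterSr. Qed.
Lemma K_dec x : Kset x -> x = V1 (A x).
Proof. by move=> hx; rewrite {1}(decomp x) (hx 0%N) add0r. Qed.
Lemma K_U x : Kset x -> Kset (U x).
Proof. by move=> hx n; rewrite PAnU hx (lin0 U_lin). Qed.
Lemma K_Uinv z : Kset (U z) -> Kset z.
Proof. by move=> h n; apply: U_inj; rewrite -PAnU h (lin0 U_lin). Qed.
Lemma K_V2 x : Kset x -> Kset (V2 x).
Proof. by move=> hx; rewrite -V1U; apply/K_V1/K_U. Qed.
Lemma K_V1_surj x : Kset x -> exists z, Kset z /\ V1 z = x.
Proof. by move=> hx; exists (A x); split; [apply: K_A | rewrite -K_dec]. Qed.
Lemma K_V2_surj x : Kset x -> exists z, Kset z /\ V2 z = x.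
Proof.
move=> hx; have [z hz] := U_surj (A x); exists z; split.
  by apply: K_Uinv; rewrite hz; apply: K_A.
by rewrite -V1U hz -K_dec.
Qed.

Fixpoint WW (b : nat -> H) (i j : nat) : H :=
  if j is j'.+1 then b i + V1 (WW b i.+1 j') else 0.

Lemma q_WW b (hb : forall n, Lorth (b n)) i j :
  q ip (WW b i j) = \sum_(i <= n < i + j) q ip (b n).
Proof.
elim: j i => [|j IH] i /=; first by rewrite addn0 big_geq // q0.
rewrite (qD hip) (cross0 _ (hb i)) mulr0 addr0 qV1 IH.
rewrite [in RHS]big_ltn ?addnS ?ltnS ?leq_addr //.
Qed.

Lemma WW_split b N i j : WW b i (N + j) = WW b i N + iter N V1 (WW b (i + N) j).
Proof.
elim: N i => [|N IH] i /=; first by rewrite add0r addn0.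
by rewrite IH (linD V1lin) addrA addSnnS.
Qed.

Lemma An_WW b (hb : forall n, Lorth (b n)) i j : iter j A (WW b i j) = 0.
Proof.
elim: j i => [|j IH] i //.
change (WW b i j.+1) with (b i + V1 (WW b i.+1 j)).
by rewrite iterSr (linD Alin) A_L // AV1 add0r IH.
Qed.

Lemma P_T b (hb : forall n, Lorth (b n)) m M : (m < M)%N -> P (iter m A (WW b 0 M)) = b m.
Proof.
move=> hm.
rewrite -(subnKC (ltnW hm)) WW_split (linD (iterA_lin m)) An_WW // add0r.
rewrite AnV1n // subnn /= add0n -(subnSK hm) /=.
by rewrite (linD Plin) PV1 addr0 P_L.
Qed.

Lemma surj_main b (hb : forall n, Lorth (b n)) s
  (hs : rcv (fun N => \sum_(0 <= k < N) q ip (b k)) s) k (hk : Kset k) :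
  exists x, (forall n, P (iter n A x) = b n) /\ U2H x = k.
Proof.
pose T M := WW b 0 M.
pose S M := \sum_(0 <= n < M) q ip (b n).
have qT : forall M, q ip (T M) = S M by move=> M; rewrite /T q_WW // add0n.
have dT : forall N M, (N <= M)%N -> q ip (T M - T N) = S M - S N.
  move=> N M hNM.
  rewrite /T -(subnKC hNM) WW_split addrAC subrr add0r q_iterV1 q_WW // add0n.
  rewrite /S (big_cat_nat (leq0n N) (leq_addr _ N)) /=.
  by rewrite addrAC subrr add0r.
have cau : cauq ip T.
  move=> e e0; have [N hN] := rcv_cauchy hs e0; exists N => m n hm hn.
  have [hmn|hnm] := leqP n m.
    rewrite dT //; have := hN m n hm hn.
    by rewrite ger0_norm // -dT // q_ge0.
  rewrite q_sym // dT; last exact: ltnW.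
  have := hN n m hn hm.
  by rewrite ger0_norm // -dT ?q_ge0 // ltnW.
have [t ht] := complete hcomp cau.
have Pt : forall m, P (iter m A t) = b m.
  move=> m; apply: (cvq_uniq hip) (cvq_PAn m ht) _.
  apply: (cvq_ext _ (cvq_cst hip (b m))).
  by exists m.+1 => n hn; rewrite /T P_T.
have Ut : U2H t = 0.
  apply: (q_eq0 hip).
  have h1 := series_U1 t.
  have h2 : rcv S (q ip t).
    move=> e e0; have [N hN] := cvq_q hip ht e0; exists N => n hn.
    by rewrite -qT; apply: hN.
  have h3 : rcv S (q ip t - q ip (U2H t)).
    move=> e e0; have [N hN] := h1 e e0; exists N => n hn.
    rewrite /S -(eq_bigr _ (fun i _ => congr1 (q ip) (Pt i))).
    exact: hN.
  have := rcv_uniq h2 h3.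
  move=> h; have : q ip (U2H t) = q ip t - (q ip t - q ip (U2H t)) by rewrite opprB addrC subrK.
  by rewrite -h subrr.
exists (t + k); split.
  by move=> n; rewrite (linD (PAn_lin n)) Pt hk addr0.
by rewrite (linD U2H_lin) Ut add0r U2H_Kid.
Qed.

Definition LD : subdata H := SubData Lorth0 Lorth_lin.
Definition KD : subdata H := SubData Kset0 Kset_lin.
Definition Lt := subsp LD.
Definition Kt := subsp KD.
Definition ipL : Lt -> Lt -> R[i] := ipS ip (D := LD).
Definition ipK : Kt -> Kt -> R[i] := ipS ip (D := KD).
Definition U1 (x : H) (n : nat) : Lt := @mkS _ _ LD _ (P_orth (iter n A x)).
Definition U2 (x : H) : Kt := @mkS _ _ KD _ (U2H_K x).
Definition W (l : Lt) : Lt := @mkS _ _ LD _ (U_Lorth (svP l)).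
Definition W1 (k : Kt) : Kt := @mkS _ _ KD _ (K_V1 (svP k)).
Definition W2 (k : Kt) : Kt := @mkS _ _ KD _ (K_V2 (svP k)).

Lemma hnorm_sq (G : lmodType R[i]) (ipG : G -> G -> R[i]) (hG : is_inner_product ipG) y :
  hnorm ipG y ^+ 2 = q ipG y.
Proof. by rewrite /hnorm sqr_sqrtr // q_ge0. Qed.

Lemma main_result :
    [/\ is_hilbert_sp ipL, is_hilbert_sp ipK &
         is_unitary_onto_H2L_sum ip ipL ipK U1 U2] /\
    [/\ is_unitary_op ipL W, is_unitary_op ipK W1, is_unitary_op ipK W2 &
         (forall k, W1 (W2 k) = W2 (W1 k))] /\
    (forall x, U1 (V1 x) = Mz_tensor id (U1 x) /\ U2 (V1 x) = W1 (U2 x)) /\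
    (forall x, U1 (V2 x) = Mz_tensor W (U1 x) /\ U2 (V2 x) = W2 (U2 x)).
Proof.
have hL : is_hilbert_sp ipL by apply: (subsp_hilbert hip hcomp); exact: Lclosed.
have hK : is_hilbert_sp ipK by apply: (subsp_hilbert hip hcomp); exact: Kclosed.
have iL : is_inner_product ipL by case: hL.
have iK : is_inner_product ipK by case: hK.
have hU : is_unitary_onto_H2L_sum ip ipL ipK U1 U2.
  split.
  + by move=> a x y n; apply: sv_inj; rewrite svZD !mkSK (PAn_lin n).
  + by move=> a x y; apply: sv_inj; rewrite svZD !mkSK U2H_lin.
  + move=> x e e0; have [N hN] := series_U1 x e0; exists N => n hn.
    rewrite !hnorm_sq //.
    rewrite (eq_bigr (fun k => q ip (P (iter k A x)))); last by move=> i _; rewrite hnorm_sq.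
    by apply: hN.
  + move=> a k [s hs].
    have hb : forall n, Lorth (sv (a n)) by move=> n; apply: (svP (a n)).
    have hs' : rcv (fun N => \sum_(0 <= i < N) q ip (sv (a i))) s.
      move=> e e0; have [N hN] := hs e e0; exists N => n hn.
      rewrite -(eq_bigr _ (fun i _ => hnorm_sq iL (a i))); exact: hN.
    have [x [hx1 hx2]] := surj_main hb hs' (svP k).
    exists x; split.
      by apply: funext => n; apply: sv_inj; rewrite mkSK hx1.
    by apply: sv_inj; rewrite mkSK hx2.
have hW : is_unitary_op ipL W.
  split; first split.
  + by move=> a x y; apply: sv_inj; rewrite svZD !mkSK svZD U_lin.
  + by move=> x y; rewrite /ipL /ipS !mkSK ipU.
  + move=> l; have [m hm] := U_surj (sv l).
    have hmL : Lorth m by apply: Uinv_Lorth; rewrite hm; apply: (svP l).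
    by exists (@mkS _ _ LD _ hmL); apply: sv_inj; rewrite mkSK mkSK.
have hW1 : is_unitary_op ipK W1.
  split; first split.
  + by move=> a x y; apply: sv_inj; rewrite svZD !mkSK svZD V1lin.
  + by move=> x y; rewrite /ipK /ipS !mkSK ipV1.
  + move=> l; have [m [hmK hm]] := K_V1_surj (svP l).
    by exists (@mkS _ _ KD _ hmK); apply: sv_inj; rewrite mkSK mkSK.
have hW2 : is_unitary_op ipK W2.
  split; first split.
  + by move=> a x y; apply: sv_inj; rewrite svZD !mkSK svZD V2lin.
  + by move=> x y; rewrite /ipK /ipS !mkSK ipV2.
  + move=> l; have [m [hmK hm]] := K_V2_surj (svP l).
    by exists (@mkS _ _ KD _ hmK); apply: sv_inj; rewrite mkSK mkSK.
have hc : forall k, W1 (W2 k) = W2 (W1 k).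
  by move=> k; apply: sv_inj; rewrite !mkSK hcomm.
have i1 : forall x, U1 (V1 x) = Mz_tensor id (U1 x) /\ U2 (V1 x) = W1 (U2 x).
  move=> x; split.
    by apply: funext; case=> [|n]; apply: sv_inj; rewrite ?mkSK ?PA_V1_0 ?PA_V1_S.
  by apply: sv_inj; rewrite !mkSK U2H_V1.
have i2 : forall x, U1 (V2 x) = Mz_tensor W (U1 x) /\ U2 (V2 x) = W2 (U2 x).
  move=> x; split.
    by apply: funext; case=> [|n]; apply: sv_inj; rewrite ?mkSK ?PA_V2_0 ?PA_V2_S.
  by apply: sv_inj; rewrite !mkSK U2H_V2.
by split; [split | split; [split | split]].
Qed.

End Main.

Theorem theorem5p4 (R : realType) (H : lmodType R[i]) (ipH : H -> H -> R[i])
  (V1 V2 : H -> H) :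
  is_hilbert_sp ipH ->
  is_isometry_op ipH V1 -> is_isometry_op ipH V2 ->
  (forall x, V1 (V2 x) = V2 (V1 x)) ->
  same_range V1 V2 ->
  exists (L : lmodType R[i]) (ipL : L -> L -> R[i])
         (K : lmodType R[i]) (ipK : K -> K -> R[i])
         (W : L -> L) (W1 W2 : K -> K)
         (U1 : H -> nat -> L) (U2 : H -> K),
    [/\ is_hilbert_sp ipL, is_hilbert_sp ipK &
         is_unitary_onto_H2L_sum ipH ipL ipK U1 U2] /\
    [/\ is_unitary_op ipL W, is_unitary_op ipK W1, is_unitary_op ipK W2 &
         (forall k, W1 (W2 k) = W2 (W1 k))] /\
    (forall x, U1 (V1 x) = Mz_tensor id (U1 x) /\ U2 (V1 x) = W1 (U2 x)) /\
    (forall x, U1 (V2 x) = Mz_tensor W (U1 x) /\ U2 (V2 x) = W2 (U2 x)).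
Proof.
move=> [hip hcomp] hV1 hV2 hcomm hran.
have h := main_result hip hcomp hV1 hV2 hcomm hran.

exists (Lt hip V1), (ipL (V1:=V1)), (Kt hip hcomp hV1), (ipK (hV1:=hV1)).
exists (W hcomp hV1 hV2 hcomm hran), (W1 (hV1:=hV1)), (W2 hV2 hcomm hran), (U1 hip hcomp hV1), (U2 hip hcomp hV1).
exact: h.
Qed.
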